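(* $\mathsf{G3iLL}$ has sequent interpolation: for all finite multisets of formulas $\Gamma,\Gamma'$ and every multiset $\Delta$ of at most one formula, if $\Gamma,\Gamma'\Rightarrow\Delta$ is derivable in $\mathsf{G3iLL}$, then there is a formula $\chi$ such that $\Gamma\Rightarrow\chi$ and $\Gamma',\chi\Rightarrow\Delta$ are derivable in $\mathsf{G3iLL}$ and every atom occurring in $\chi$ occurs both in $\Gamma$ and in $\Gamma'\cup\Delta$.
   Context: Formulas are built from the constant $\bot$ and propositional atoms (with $\bot$ not an atom) using $\wedge,\vee,\to$ and a unary modal operator $\bigcirc$. A sequent is $\Gamma\Rightarrow\Delta$ with $\Gamma,\Delta$ finite multisets of formulas, $\Delta$ containing at most one formula. The calculus $\mathsf{G3iLL}$ has axioms $\Gamma,p\Rightarrow p$ ($p$ an atom) and $\Gamma,\bot\Rightarrow\Delta$, and rules (premisses / conclusion): $R\wedge$: $\Gamma\Rightarrow\phi$, $\Gamma\Rightarrow\psi$ / $\Gamma\Rightarrow\phi\wedge\psi$; $L\wedge$: $\Gamma,\phi,\psi\Rightarrow\Delta$ / $\Gamma,\phi\wedge\psi\Rightarrow\Delta$; $R\vee$: $\Gamma\Rightarrow\phi_i$ / $\Gamma\Rightarrow\phi_0\vee\phi_1$ ($i=0,1$); $L\vee$: $\Gamma,\phi\Rightarrow\Delta$, $\Gamma,\psi\Rightarrow\Delta$ / $\Gamma,\phi\vee\psi\Rightarrow\Delta$; $R\to$: $\Gamma,\phi\Rightarrow\psi$ / $\Gamma\Rightarrow\phi\to\psi$; $L\to$: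 $\Gamma,\phi\to\psi\Rightarrow\phi$, $\Gamma,\psi\Rightarrow\Delta$ / $\Gamma,\phi\to\psi\Rightarrow\Delta$; $R\bigcirc$: $\Gamma\Rightarrow\phi$ / $\Gamma\Rightarrow\bigcirc\phi$; $L\bigcirc$: $\Gamma,\psi\Rightarrow\bigcirc\phi$ / $\Gamma,\bigcirc\psi\Rightarrow\bigcirc\phi$. *)

(* Defs.v *)
From Stdlib Require Import List Permutation.
Import ListNotations.

Inductive form : Type :=
| Bot : form
| Var : nat -> form
| And : form -> form -> form
| Or  : form -> form -> form
| Imp : form -> form -> form
| Circ : form -> form.

(* Sequents Gamma => Delta: Gamma a finite multiset (list taken up to
   permutation), Delta at most one formula (option form).
   "Gamma, phi" is represented by any list that is a permutation of
   phi :: Gamma. *)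
Inductive G3iLL : list form -> option form -> Prop :=
| Ax : forall G G' p, Permutation G' (Var p :: G) -> G3iLL G' (Some (Var p))
| LBot : forall G G' D, Permutation G' (Bot :: G) -> G3iLL G' D
| RAnd : forall G a b, G3iLL G (Some a) -> G3iLL G (Some b) -> G3iLL G (Some (And a b))
| LAnd : forall G G' a b D, Permutation G' (And a b :: G) ->
    G3iLL (a :: b :: G) D -> G3iLL G' D
| ROr0 : forall G a b, G3iLL G (Some a) -> G3iLL G (Some (Or a b))
| ROr1 : forall G a b, G3iLL G (Some b) -> G3iLL G (Some (Or a b))
| LOr : forall G G' a b D, Permutation G' (Or a b :: G) ->
    G3iLL (a :: G) D -> G3iLL (b :: G) D -> G3iLL G' D
| RImp : forall G a b, G3iLL (a :: G) (Some b) -> G3iLL G (Some (Imp a b))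
| LImp : forall G G' a b D, Permutation G' (Imp a b :: G) ->
    G3iLL (Imp a b :: G) (Some a) -> G3iLL (b :: G) D -> G3iLL G' D
| RCirc : forall G a, G3iLL G (Some a) -> G3iLL G (Some (Circ a))
| LCirc : forall G G' a b, Permutation G' (Circ b :: G) ->
    G3iLL (b :: G) (Some (Circ a)) -> G3iLL G' (Some (Circ a)).

Fixpoint atoms (f : form) : list nat :=
  match f with
  | Bot => []
  | Var p => [p]
  | And a b | Or a b | Imp a b => atoms a ++ atoms b
  | Circ a => atoms a
  end.

Definition occurs_in_ctx (p : nat) (G : list form) : Prop :=
  exists f, In f G /\ In p (atoms f).

Definition occurs_in_succ (p : nat) (D : option form) : Prop :=
  match D with Some f => In p (atoms f) | None => False end.

(* Main.v *)
Require Import Defs.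
From Stdlib Require Import List Permutation.
Import ListNotations.

Lemma exch : forall G D, G3iLL G D -> forall G2, Permutation G G2 -> G3iLL G2 D.
Proof.
  induction 1; intros G2 HP.
  - eapply Ax. symmetry in HP. eapply perm_trans; eauto.
  - eapply LBot. symmetry in HP. eapply perm_trans; eauto.
  - apply RAnd; auto.
  - eapply LAnd; [|eauto]. symmetry in HP. eapply perm_trans; eauto.
  - apply ROr0; auto.
  - apply ROr1; auto.
  - eapply LOr; [|exact H0|exact H1]. symmetry in HP. eapply perm_trans; eauto.
  - apply RImp; auto.
  - eapply LImp; [|eauto|eauto]. symmetry in HP. eapply perm_trans; eauto.
  - apply RCirc; auto.
  - eapply LCirc; [|eauto]. symmetry in HP. eapply perm_trans; eauto.
Qed.

Lemma weak : forall G D, G3iLL G D -> forall x, G3iLL (x :: G) D.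
Proof.
  induction 1; intros x.
  - eapply Ax with (G := x :: G). rewrite H. apply perm_swap.
  - eapply LBot with (G := x :: G). rewrite H. apply perm_swap.
  - apply RAnd; auto.
  - eapply LAnd with (G := x :: G). rewrite H. apply perm_swap.
    eapply exch; [apply IHG3iLL|]. 
    etransitivity; [apply perm_swap|]. apply perm_skip. apply perm_swap.
  - apply ROr0; auto.
  - apply ROr1; auto.
  - eapply LOr with (G := x :: G). rewrite H. apply perm_swap.
    eapply exch; [apply IHG3iLL1|]. apply perm_swap.
    eapply exch; [apply IHG3iLL2|]. apply perm_swap.
  - apply RImp. eapply exch; [apply IHG3iLL|]. apply perm_swap.
  - eapply LImp with (G := x :: G). rewrite H. apply perm_swap.
    eapply exch; [apply IHG3iLL1|]. apply perm_swap.
    eapply exch; [apply IHG3iLL2|]. apply perm_swap.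
  - apply RCirc; auto.
  - eapply LCirc with (G := x :: G). rewrite H. apply perm_swap.
    eapply exch; [apply IHG3iLL|]. apply perm_swap.
Qed.

Lemma split_perm (X : form) (L G G' : list form) : Permutation (X :: L) (G ++ G') ->
  (exists G1, Permutation G (X :: G1) /\ Permutation L (G1 ++ G')) \/
  (exists G1, Permutation G' (X :: G1) /\ Permutation L (G ++ G1)).
Proof.
  intros HP.
  assert (Hin : In X (G ++ G')) by (eapply Permutation_in; eauto; left; auto).
  apply in_app_or in Hin as [Hin|Hin]; apply in_split in Hin as (l1 & l2 & ->).
  - left. exists (l1 ++ l2). split.
    + symmetry. apply Permutation_middle.
    + apply Permutation_cons_inv with X. rewrite HP.
      rewrite <- app_assoc. simpl. rewrite <- Permutation_middle.
      rewrite app_assoc. reflexivity.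
  - right. exists (l1 ++ l2). split.
    + symmetry. apply Permutation_middle.
    + apply Permutation_cons_inv with X. rewrite HP.
      rewrite <- Permutation_middle. rewrite <- Permutation_middle. reflexivity.
Qed.

Lemma occ_perm_iff G G2 p : Permutation G G2 -> (occurs_in_ctx p G <-> occurs_in_ctx p G2).
Proof.
  intros HP; unfold occurs_in_ctx; split; intros (f & H1 & H2); exists f; split; auto.
  eapply Permutation_in; eauto.
  eapply Permutation_in; [symmetry|]; eauto.
Qed.

Lemma occ_cons p x G : occurs_in_ctx p (x :: G) <-> In p (atoms x) \/ occurs_in_ctx p G.
Proof.
  unfold occurs_in_ctx; simpl; split.
  - intros (f & [->|H1] & H2); eauto.
  - intros [H|(f & H1 & H2)]; eauto.
Qed.

Definition ok chi G G' D := forall p, In p (atoms chi) ->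
  occurs_in_ctx p G /\ (occurs_in_ctx p G' \/ occurs_in_succ p D).

Definition Top := Imp Bot Bot.

Lemma top_der G : G3iLL G (Some Top).
Proof. apply RImp. eapply LBot. reflexivity. Qed.

Ltac pcons :=
  simpl;
  match goal with
  | |- Permutation ?l ?l => reflexivity
  | |- Permutation (?a :: ?l) (?a :: ?r) => apply perm_skip; pcons
  | |- Permutation (?a :: ?l) (?b :: ?a :: ?r) =>
      etransitivity; [|apply perm_swap]; apply perm_skip; pcons
  | |- Permutation (?a :: ?l) (?b :: ?c :: ?a :: ?r) =>
      etransitivity; [|apply perm_skip; apply perm_swap];
      etransitivity; [|apply perm_swap]; apply perm_skip; pcons
  | |- Permutation (?a :: ?l) (?b :: ?c :: ?d :: ?a :: ?r) =>
      etransitivity; [|apply perm_skip; apply perm_skip; apply perm_swap];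
      etransitivity; [|apply perm_skip; apply perm_swap];
      etransitivity; [|apply perm_swap]; apply perm_skip; pcons
  end.

Ltac ex H := eapply exch; [apply H|]; pcons.
Ltac exw H x := eapply exch; [apply (weak _ _ H x)|]; pcons.

Ltac okt0 := let r := fresh "r" in intros r Hp; unfold ok in *; simpl in Hp;
  repeat match goal with H: forall q : nat, _ |- _ => specialize (H r) end.
Ltac okfin := repeat (rewrite ?occ_cons in *; simpl in *; rewrite ?in_app_iff in *); tauto.
Ltac okt Q := okt0; rewrite (occ_perm_iff _ _ _ Q) in *; okfin.
Ltac okn := okt0; okfin.

Lemma interp : forall L D, G3iLL L D -> forall GG GG', Permutation L (GG ++ GG') ->
  exists chi, G3iLL GG (Some chi) /\ G3iLL (chi :: GG') D /\ ok chi GG GG' D.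
Proof.
  induction 1; intros GG GG' HP.
  Ltac sp X L H GG GG' HP := destruct (split_perm X L GG GG') as [(G1&Q1&Q2)|(G1&Q1&Q2)];
     [eapply perm_trans; [symmetry; exact H|exact HP]| |].
  - sp (Var p) G H GG GG' HP.
    + exists (Var p). split; [eapply Ax; exact Q1|]. split; [eapply Ax; reflexivity|]. okt Q1.
    + exists Top. split; [apply top_der|]. split;
      [eapply Ax with (G := Top :: G1); rewrite Q1; apply perm_swap|]. okn.
  - sp Bot G H GG GG' HP.
    + exists Bot. split; [eapply LBot; exact Q1|]. split; [eapply LBot; reflexivity|]. okn.
    + exists Top. split; [apply top_der|]. split;
      [eapply LBot with (G := Top :: G1); rewrite Q1; apply perm_swap|]. okn.
  - destruct (IHG3iLL1 _ _ HP) as (c1 & A1 & B1 & C1).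
    destruct (IHG3iLL2 _ _ HP) as (c2 & A2 & B2 & C2).
    exists (And c1 c2). split; [apply RAnd; auto|]. split.
    + eapply LAnd with (G:=GG'); [reflexivity|]. apply RAnd; [exw B1 c2|exw B2 c1].
    + okn.
  - sp (And a b) G H GG GG' HP.
    + destruct (IHG3iLL (a::b::G1) GG') as (c & A & B & C). { rewrite Q2; reflexivity. }
      exists c. split; [eapply LAnd; [exact Q1|exact A]|]. split; [exact B|]. okt Q1.
    + destruct (IHG3iLL GG (a::b::G1)) as (c & A & B & C).
      { rewrite Q2. rewrite <- !Permutation_middle. reflexivity. }
      exists c. split; [exact A|]. split.
      * eapply LAnd with (G := c::G1); [rewrite Q1; apply perm_swap|]. ex B.
      * okt Q1.
  - destruct (IHG3iLL _ _ HP) as (c & A & B & C).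
    exists c. split; [exact A|]. split; [apply ROr0; exact B|]. okn.
  - destruct (IHG3iLL _ _ HP) as (c & A & B & C).
    exists c. split; [exact A|]. split; [apply ROr1; exact B|]. okn.
  - sp (Or a b) G H GG GG' HP.
    + destruct (IHG3iLL1 (a::G1) GG') as (c1 & A1 & B1 & C1). { rewrite Q2; reflexivity. }
      destruct (IHG3iLL2 (b::G1) GG') as (c2 & A2 & B2 & C2). { rewrite Q2; reflexivity. }
      exists (Or c1 c2). split; [eapply LOr; [exact Q1|apply ROr0; exact A1|apply ROr1; exact A2]|].
      split; [eapply LOr with (G := GG'); [reflexivity|exact B1|exact B2]|]. okt Q1.
    + destruct (IHG3iLL1 GG (a::G1)) as (c1 & A1 & B1 & C1).
      { rewrite Q2; apply Permutation_middle. }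
      destruct (IHG3iLL2 GG (b::G1)) as (c2 & A2 & B2 & C2).
      { rewrite Q2; apply Permutation_middle. }
      exists (And c1 c2). split; [apply RAnd; auto|]. split.
      * eapply LAnd with (G:=GG'); [reflexivity|].
        eapply LOr with (G := c1::c2::G1) (a := a) (b := b); [rewrite Q1; pcons|exw B1 c2|exw B2 c1].
      * okt Q1.
  - destruct (IHG3iLL GG (a::GG')) as (c & A & B & C).
    { rewrite HP; apply Permutation_middle. }
    exists c. split; [exact A|]. split; [apply RImp; ex B|]. okn.
  - sp (Imp a b) G H GG GG' HP.
    + destruct (IHG3iLL1 GG' (Imp a b :: G1)) as (c1 & A1 & B1 & C1).
      { rewrite Q2. rewrite <- Permutation_middle. apply perm_skip. apply Permutation_app_comm. }
      destruct (IHG3iLL2 (b::G1) GG') as (c2 & A2 & B2 & C2). { rewrite Q2; reflexivity. }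
      exists (Imp c1 c2). split.
      * apply RImp. eapply LImp with (G := c1::G1) (a := a) (b := b); [rewrite Q1; apply perm_swap|ex B1|exw A2 c1].
      * split; [eapply LImp with (G := GG'); [reflexivity|apply weak; exact A1|exact B2]|].
        okt Q1.
    + destruct (IHG3iLL1 GG (Imp a b :: G1)) as (c1 & A1 & B1 & C1).
      { rewrite Q2; apply Permutation_middle. }
      destruct (IHG3iLL2 GG (b::G1)) as (c2 & A2 & B2 & C2).
      { rewrite Q2; apply Permutation_middle. }
      exists (And c1 c2). split; [apply RAnd; auto|]. split.
      * eapply LAnd with (G:=GG'); [reflexivity|].
        eapply LImp with (G := c1::c2::G1) (a := a) (b := b); [rewrite Q1; pcons|exw B1 c2|exw B2 c1].
      * okt Q1.
  - destruct (IHG3iLL _ _ HP) as (c & A & B & C).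
    exists c. split; [exact A|]. split; [apply RCirc; exact B|]. okn.
  - sp (Circ b) G H GG GG' HP.
    + destruct (IHG3iLL (b::G1) GG') as (c & A & B & C). { rewrite Q2; reflexivity. }
      exists (Circ c). split; [eapply LCirc; [exact Q1|apply RCirc; exact A]|].
      split; [eapply LCirc with (G := GG'); [reflexivity|exact B]|]. okt Q1.
    + destruct (IHG3iLL GG (b::G1)) as (c & A & B & C).
      { rewrite Q2; apply Permutation_middle. }
      exists c. split; [exact A|]. split.
      * eapply LCirc with (G := c::G1); [rewrite Q1; apply perm_swap|ex B].
      * okt Q1.
Qed.

Theorem mainTheorem3 :
  forall (G G' : list form) (D : option form),
    G3iLL (G ++ G') D ->
    exists chi : form,
      G3iLL G (Some chi) /\
      G3iLL (G' ++ [chi]) D /\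
      (forall p, In p (atoms chi) ->
         occurs_in_ctx p G /\ (occurs_in_ctx p G' \/ occurs_in_succ p D)).
Proof.
  intros G G' D H.
  destruct (interp _ _ H G G' (Permutation_refl _)) as (c & A & B & C).
  exists c. split; [exact A|]. split; [|exact C].
  eapply exch; [exact B|]. apply Permutation_cons_append.
Qed.
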